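(* Consider a Boolean control network $\mathbf{x}(t+1)=L\ltimes\mathbf{u}(t)\ltimes\mathbf{x}(t)$, $\mathbf{y}(t)=H\mathbf{x}(t)$, $t\in\mathbb{Z}_+$, with $L\in\mathcal{L}_{N\times NM}$, $H\in\mathcal{L}_{P\times N}$, and a periodic reference output trajectory of minimal period $T\ge1$ given by $\mathbf{y}_r(s+kT)=\delta_P^{i_s}$ for $s\in[1,T]$, $k\in\mathbb{Z}_+$. The following are equivalent: (i) the periodic trajectory is trackable from every $\mathbf{x}_0\in\mathcal{L}_N$, i.e. for every $\mathbf{x}_0$ there is an infinite input sequence $\{\mathbf{u}(t)\}_{t\in\mathbb{Z}_+}\subset\mathcal{L}_M$ such that the resulting state trajectory with $\mathbf{x}(0)=\mathbf{x}_0$ satisfies $H\mathbf{x}(t)=\mathbf{y}_r(t)$ for all $t\ge1$; (ii) the finite-length trajectory $\{\mathbf{y}_r(t)\}_{t=1}^T$ is trackable from every $\mathbf{x}_0\in\mathcal{L}_N$, i.e. for every $\mathbf{x}_0$ there are inputs $\mathbf{u}(0),\dots,\mathbf{u}(T-1)\in\mathcal{L}_M$ such that $H\mathbf{x}(t)=\mathbf{y}_r(t)$ for all $t\in[1,T]$.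
   Context: $\delta_k^i$ is the $i$-th canonical vector of $\mathbb{R}^k$; $\mathcal{L}_k$ is the set of canonical vectors of $\mathbb{R}^k$; $\mathcal{L}_{k\times q}$ the set of $k\times q$ matrices whose columns are in $\mathcal{L}_k$. $N=2^n$, $M=2^m$, $P=2^p$. Writing $L=[L_1|\cdots|L_M]$ with $L_i\in\mathcal{L}_{N\times N}$, one has $L\ltimes\delta_M^i\ltimes\mathbf{x}=L_i\mathbf{x}$ for $\mathbf{x}\in\mathcal{L}_N$. *)

(* Defs.v *)
From mathcomp Require Import all_boot.
Set Implicit Arguments. Unset Strict Implicit. Unset Printing Implicit Defensive.

(* Logical matrices: a matrix A in L_{k x q} (all columns canonical vectors of
   R^k) is represented by the finite function mapping column index j : 'I_q
   to the (0-based) row index of its unique 1, i.e. Col_j(A) = delta_k^{A j + 1}.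
   A canonical vector delta_k^{i+1} is represented by i : 'I_k. *)
Definition logical_mx (k q : nat) := {ffun 'I_q -> 'I_k}.

(* Semi-tensor product of canonical vectors:
   delta_M^{u+1} |x delta_N^{x+1} = delta_{NM}^{u*N + x + 1}. *)
Lemma stp_index_proof (N M : nat) (u : 'I_M) (x : 'I_N) : u * N + x < N * M.
Proof.
case: u => u /= hu; case: x => x /= hx.
have h1 : u * N + x < u * N + N by rewrite ltn_add2l.
apply: (leq_trans h1).
by rewrite -mulSnr mulnC leq_mul2l hu orbT.
Qed.

Definition stp_index (N M : nat) (u : 'I_M) (x : 'I_N) : 'I_(N * M) :=
  Ordinal (stp_index_proof u x).

Definition bcn_step (N M : nat) (L : logical_mx N (N * M)) (u : 'I_M) (x : 'I_N)
  : 'I_N := L (stp_index u x).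

Fixpoint bcn_traj (N M : nat) (L : logical_mx N (N * M)) (x0 : 'I_N)
  (u : nat -> 'I_M) (t : nat) : 'I_N :=
  match t with
  | 0 => x0
  | t'.+1 => bcn_step L (u t') (bcn_traj L x0 u t')
  end.

Definition bcn_out (P N : nat) (H : logical_mx P N) (x : 'I_N) : 'I_P := H x.

(* Periodic reference output: y_r(s + kT) = delta_P^{i_s}, s in [1,T];
   here ir : 'I_T -> 'I_P with ir (s-1) the (0-based) index i_s - 1. *)
Definition ref_out (P T : nat) (ir : 'I_T -> 'I_P) (hT : 0 < T) (t : nat) : 'I_P :=
  ir (Ordinal (@ltn_pmod (t.-1) T hT)).

Definition minimal_period (P : nat) (yr : nat -> 'I_P) (T : nat) : Prop :=
  0 < T /\ (forall t, 1 <= t -> yr (t + T) = yr t) /\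
  (forall T', 0 < T' < T -> exists2 t, 1 <= t & yr (t + T') <> yr t).

(* Main.v *)
Require Import Defs.
From mathcomp Require Import all_boot.
From Stdlib Require Import ClassicalEpsilon.

Section Aux.
Variables (N M T : nat) (L : logical_mx N (N * M)) (g : 'I_N -> nat -> 'I_M).
Variable x0 : 'I_N.

Fixpoint sk (k : nat) : 'I_N :=
  match k with 0 => x0 | k'.+1 => bcn_traj L (sk k') (g (sk k')) T end.

Definition uu (t : nat) : 'I_M := g (sk (t %/ T)) (t %% T).

Lemma inner (hT : 0 < T) k : bcn_traj L x0 uu (k * T) = sk k ->
  forall r, r <= T -> bcn_traj L x0 uu (k * T + r) = bcn_traj L (sk k) (g (sk k)) r.
Proof.
move=> hk; elim=> [|r IH] hr; first by rewrite addn0.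
rewrite addnS /= IH ?(ltnW hr) //; congr bcn_step.
rewrite /uu divnMDl // modnMDl divn_small // modn_small // addn0.
by [].
Qed.

Lemma outer (hT : 0 < T) k : bcn_traj L x0 uu (k * T) = sk k.
Proof.
elim: k => [|k IH] //=.
by rewrite mulSn addnC inner.
Qed.
End Aux.

Theorem proposition1 (n m p T : nat) (hT : 0 < T)
  (L : logical_mx (2 ^ n) (2 ^ n * 2 ^ m)) (H : logical_mx (2 ^ p) (2 ^ n))
  (ir : 'I_T -> 'I_(2 ^ p)) :
  minimal_period (ref_out ir hT) T ->
  ((forall x0 : 'I_(2 ^ n), exists u : nat -> 'I_(2 ^ m),
      forall t, 1 <= t -> bcn_out H (bcn_traj L x0 u t) = ref_out ir hT t)
   <->
   (forall x0 : 'I_(2 ^ n), exists u : nat -> 'I_(2 ^ m),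
      forall t, 1 <= t <= T -> bcn_out H (bcn_traj L x0 u t) = ref_out ir hT t)).
Proof.
move=> _; split.
  move=> h x0; have [u hu] := h x0; exists u => t /andP [ht _]; exact: hu.
move=> h.
pose g x := proj1_sig (constructive_indefinite_description _ (h x)).
have hg x : forall t, 1 <= t <= T ->
    bcn_out H (bcn_traj L x (g x) t) = ref_out ir hT t.
  exact: (proj2_sig (constructive_indefinite_description _ (h x))).
move=> x0; exists (@uu _ _ T L g x0) => t ht.
pose k := t.-1 %/ T; pose r := (t.-1 %% T).+1.
have ht' : t = k * T + r.
  by rewrite /k /r addnS -divn_eq prednK.
have hr : r <= T by rewrite /r ltn_pmod.
rewrite ht' inner ?outer // hg; last by rewrite hr andbT.
have -> : ref_out ir hT (k * T + r) = ref_out ir hT r.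
  rewrite /ref_out; congr ir; apply: val_inj => /=.
  by rewrite /r addnS /= modnMDl.
by [].
Qed.
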